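(* Let $S$ be a set with $|S|\ge2$ and let $\Gamma$ be a connected simple graph with vertex set $S$. For each edge $e\in E(\Gamma)$ let $eV^{(S)}\le SV$ be the associated subgroup (isomorphic to $2V$). Then $\bigcup_{e\in E(\Gamma)}eV^{(S)}$ generates $SV$.
   Context: Let $\mathfrak C=\{0,1\}^{\omega}$ and let $\mathfrak C^S$ be the space of functions $S\to\mathfrak C$. For $\psi\colon S\to\{0,1\}^*$ with $\psi(s)=\varnothing$ for all but finitely many $s$, the dyadic brick $B(\psi)$ is the set of $\kappa\in\mathfrak C^S$ with $\psi(s)$ a prefix of $\kappa(s)$ for all $s$, and the canonical homeomorphism $\Phi_\psi\colon\mathfrak C^S\to B(\psi)$ is $\Phi_\psi(\kappa)(s)=\psi(s)\cdot\kappa(s)$. The Brin–Thompson group $SV$ is the group of homeomorphisms of $\mathfrak C^S$ for which there exist two partitions $B(\varphi_1),\dots,B(\varphi_n)$ and $B(\psi_1),\dots,B(\psi_n)$ of $\mathfrak C^S$ into dyadic bricks such that $h$ maps each $B(\varphi_i)$ to $B(\psi_i)$ via $\Phi_{\psi_i}\circ\Phi_{\varphi_i}^{-1}$. For $T\subseteq S$, writing $\mathfrak C^S=\mathfrak C^T\times\mathfrak C^{S\setminus T}$, let $TV^{(S)}$ be the subgroup of $SV$ consisting of maps of the form $(a,b)\mapsto(h(a),b)$ with $h\in TV$; it is isomorphic to $TV$, and for a two-element set $e$, $eV^{(S)}$ is isomorphic to Brin's group $2V$. *)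

(* Defs.v *)
From Stdlib Require Import List Arith Relations Classical ClassicalEpsilon.
Import ListNotations.

Definition Cantor := nat -> bool.

Definition word := list bool.

Definition prefix_of (v : word) (c : Cantor) : Prop :=
  forall i, i < length v -> c i = nth i v false.

Definition wcat (v : word) (c : Cantor) : Cantor :=
  fun i => if i <? length v then nth i v false else c (i - length v).

Definition fin_supp {X : Type} (psi : X -> word) : Prop :=
  exists l : list X, forall s, ~ In s l -> psi s = [].

Definition brick {X : Type} (psi : X -> word) (k : X -> Cantor) : Prop :=
  forall s, prefix_of (psi s) (k s).

Definition Phi {X : Type} (psi : X -> word) (k : X -> Cantor) : X -> Cantor :=
  fun s => wcat (psi s) (k s).

Definition brick_partition {X : Type} (n : nat) (phi : nat -> X -> word) : Prop :=
  (forall i, i < n -> fin_supp (phi i)) /\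
  (forall i j k, i < n -> j < n -> brick (phi i) k -> brick (phi j) k -> i = j) /\
  (forall k, exists i, i < n /\ brick (phi i) k).

(* Brin--Thompson group XV: maps h of C^X that send each B(phi i) onto B(psi i)
   via Phi_{psi i} o Phi_{phi i}^{-1}, for two brick partitions.
   (Such maps are automatically homeomorphisms.) *)
Definition BV (X : Type) (h : (X -> Cantor) -> (X -> Cantor)) : Prop :=
  exists (n : nat) (phi psi : nat -> X -> word),
    brick_partition n phi /\ brick_partition n psi /\
    forall i k, i < n -> h (Phi (phi i) k) = Phi (psi i) k.

(* For T a subset of S, C^S = C^T x C^(S\T); TV^(S) acts on the first factor. *)
Definition restrictT {S : Type} (T : S -> Prop) (k : S -> Cantor)
  : {x : S | T x} -> Cantor := fun x => k (proj1_sig x).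

Definition extendT {S : Type} (T : S -> Prop)
  (h : ({x : S | T x} -> Cantor) -> ({x : S | T x} -> Cantor))
  (k : S -> Cantor) : S -> Cantor :=
  fun s => match excluded_middle_informative (T s) with
           | left p => h (restrictT T k) (exist _ s p)
           | right _ => k s
           end.

Definition subV {S : Type} (T : S -> Prop) (f : (S -> Cantor) -> (S -> Cantor)) : Prop :=
  exists h, BV {x : S | T x} h /\ f = extendT T h.

Definition edgeV {S : Type} (s t : S) := subV (fun x => x = s \/ x = t).

Inductive generated {A : Type} (G : (A -> A) -> Prop) : (A -> A) -> Prop :=
| gen_base f : G f -> generated G f
| gen_id : generated G (fun x => x)
| gen_comp f g : generated G f -> generated G g -> generated G (fun x => f (g x))
| gen_inv f g : generated G f -> (forall x, g (f x) = x) -> (forall x, f (g x) = x) ->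
                generated G g.

(* Main.v *)
Require Import Defs.
From Stdlib Require Import List Arith Relations Classical ClassicalEpsilon Lia
  FunctionalExtensionality ProofIrrelevance.
Import ListNotations.

Definition emi := excluded_middle_informative.

Definition dropC (n : nat) (c : Cantor) : Cantor := fun i => c (i + n).

Lemma wcat_prefix v c : prefix_of v (wcat v c).
Proof. intros i Hi; unfold wcat; rewrite (proj2 (Nat.ltb_lt _ _) Hi); reflexivity. Qed.

Lemma prefix_wcat v k : prefix_of v k -> k = wcat v (dropC (length v) k).
Proof.
  intro H; apply functional_extensionality; intro i; unfold wcat, dropC.
  destruct (Nat.ltb_spec i (length v)).
  - apply H; auto.
  - f_equal; lia.
Qed.

Lemma dropC_wcat v c : dropC (length v) (wcat v c) = c.
Proof.
  apply functional_extensionality; intro i; unfold wcat, dropC.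
  destruct (Nat.ltb_spec (i + length v) (length v)); [lia|]. f_equal; lia.
Qed.

Lemma dropC0 c : dropC 0 c = c.
Proof. apply functional_extensionality; intro i; unfold dropC; f_equal; lia. Qed.

Lemma wcat_nil c : wcat [] c = c.
Proof. apply functional_extensionality; intro i; unfold wcat; simpl. f_equal; lia. Qed.

Lemma wcat_app v w c : wcat v (wcat w c) = wcat (v ++ w) c.
Proof.
  apply functional_extensionality; intro i; unfold wcat. rewrite length_app.
  destruct (Nat.ltb_spec i (length v)).
  - destruct (Nat.ltb_spec i (length v + length w)); [|lia].
    rewrite app_nth1; auto.
  - destruct (Nat.ltb_spec (i - length v) (length w));
    destruct (Nat.ltb_spec i (length v + length w)); try lia.
    + rewrite app_nth2; auto.
    + f_equal; lia.
Qed.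

Lemma wcat_inj v c c' : wcat v c = wcat v c' -> c = c'.
Proof. intro H. rewrite <- (dropC_wcat v c), <- (dropC_wcat v c'), H; auto. Qed.

Lemma prefix_app v w k :
  prefix_of (v ++ w) k <-> prefix_of v k /\ prefix_of w (dropC (length v) k).
Proof.
  unfold prefix_of, dropC; split.
  - intros H; split.
    + intros i Hi. rewrite H by (rewrite length_app; lia). rewrite app_nth1; auto.
    + intros i Hi. rewrite H by (rewrite length_app; lia). rewrite app_nth2 by lia.
      f_equal; lia.
  - intros [H1 H2] i Hi. rewrite length_app in Hi.
    destruct (Nat.lt_ge_cases i (length v)).
    + rewrite app_nth1; auto.
    + rewrite app_nth2 by lia. rewrite <- H2 by lia. f_equal; lia.
Qed.

Lemma prefix_app_l v w k : prefix_of (v ++ w) k -> prefix_of v k.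
Proof. intro H; apply prefix_app in H; tauto. Qed.

Lemma prefix_nil k : prefix_of [] k.
Proof. intros i Hi; simpl in Hi; lia. Qed.

Lemma prefix_le v w k : prefix_of v k -> prefix_of w k -> length v <= length w ->
  exists z, w = v ++ z.
Proof.
  intros Hv Hw Hl. exists (skipn (length v) w).
  rewrite <- (firstn_skipn (length v) w) at 1. f_equal.
  apply nth_ext with (d := false) (d' := false).
  - rewrite length_firstn; lia.
  - intros i Hi. rewrite length_firstn in Hi.
    rewrite nth_firstn. destruct (Nat.ltb_spec i (length v)); [|lia].
    rewrite <- Hv, <- Hw by lia; auto.
Qed.

Lemma prefix_eq v w k : prefix_of v k -> prefix_of w k -> length v = length w -> v = w.
Proof.
  intros Hv Hw Hl. destruct (prefix_le v w k Hv Hw) as [z Hz]; [lia|].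
  subst w. rewrite length_app in Hl. destruct z; [rewrite app_nil_r; auto|simpl in Hl; lia].
Qed.

Definition firstC (n : nat) (c : Cantor) : word := map c (seq 0 n).

Lemma firstC_len n c : length (firstC n c) = n.
Proof. unfold firstC; rewrite length_map, length_seq; auto. Qed.

Lemma firstC_prefix n c : prefix_of (firstC n c) c.
Proof.
  intros i Hi. rewrite firstC_len in Hi. unfold firstC.
  rewrite nth_indep with (d' := c 0) by (rewrite length_map, length_seq; auto).
  rewrite map_nth, seq_nth; auto.
Qed.

Ltac nlia := try unfold word in *; lia.
Section MW.
Variable X : Type.
Implicit Types (a b c : X -> word) (y k : X -> Cantor) (h : (X -> Cantor) -> (X -> Cantor)).
Definition app2 (a b : X -> word) : X -> word := fun s => a s ++ b s.
Definition stripM (a : X -> word) (k : X -> Cantor) : X -> Cantor :=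
  fun s => dropC (length (a s)) (k s).

Lemma Phi_app a b y : Phi a (Phi b y) = Phi (app2 a b) y.
Proof. apply functional_extensionality; intro s; unfold Phi, app2; apply wcat_app. Qed.

Lemma brick_Phi a y : brick a (Phi a y).
Proof. intro s; apply wcat_prefix. Qed.

Lemma brick_strip a k : brick a k -> k = Phi a (stripM a k).
Proof. intro H; apply functional_extensionality; intro s; apply prefix_wcat, H. Qed.

Lemma strip_Phi a y : stripM a (Phi a y) = y.
Proof. apply functional_extensionality; intro s; apply dropC_wcat. Qed.

Lemma Phi_inj a y y' : Phi a y = Phi a y' -> y = y'.
Proof. intro H. rewrite <- (strip_Phi a y), <- (strip_Phi a y'), H; auto. Qed.

Lemma brick_ex a k : brick a k <-> exists y, k = Phi a y.
Proof. split; [intro H; eexists; apply brick_strip, H| intros [y ->]; apply brick_Phi]. Qed.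

Lemma brick_app2_l a b k : brick (app2 a b) k -> brick a k.
Proof. intros H s; apply (prefix_app_l _ (b s)), H. Qed.

Lemma brick_app2 a b k : brick a k -> brick b (stripM a k) -> brick (app2 a b) k.
Proof.
  intros Ha Hb. rewrite (brick_strip a k Ha), (brick_strip b _ Hb), Phi_app. apply brick_Phi.
Qed.

Lemma fin_supp_app2 a b : fin_supp a -> fin_supp b -> fin_supp (app2 a b).
Proof.
  intros [l1 H1] [l2 H2]; exists (l1 ++ l2); intros s Hs; unfold app2.
  rewrite H1, H2; auto; intro; apply Hs; apply in_or_app; auto.
Qed.

Definition part {A} (l : list A) (f : A -> X -> word) : Prop :=
  (forall q, In q l -> fin_supp (f q)) /\
  (forall k, exists q, In q l /\ brick (f q) k) /\
  (forall q1 q2 k, In q1 l -> In q2 l -> brick (f q1) k -> brick (f q2) k -> q1 = q2).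

Definition pr := ((X -> word) * (X -> word))%type.

Definition Rep (h : (X -> Cantor) -> (X -> Cantor)) (L : list pr) : Prop :=
  part L fst /\ part L snd /\ forall p y, In p L -> h (Phi (fst p) y) = Phi (snd p) y.

Lemma part_map {A B} (l : list A) (m : A -> B) f :
  part l (fun q => f (m q)) -> part (map m l) f.
Proof.
  intros [H1 [H2 H3]]; split; [|split].
  - intros q Hq; apply in_map_iff in Hq; destruct Hq as [q' [<- Hq']]; auto.
  - intro k; destruct (H2 k) as [q [Hq Hb]]; exists (m q); split; auto; apply in_map; auto.
  - intros q1 q2 k Hq1 Hq2 B1 B2.
    apply in_map_iff in Hq1; destruct Hq1 as [q1' [<- Hq1]].
    apply in_map_iff in Hq2; destruct Hq2 as [q2' [<- Hq2]].
    f_equal; eapply H3; eauto.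
Qed.

Definition dpr : pr := (fun _ => [], fun _ => []).

Lemma BV_Rep h : BV X h <-> exists L, Rep h L.
Proof.
  split.
  - intros [n [phi [psi [[P1 [P2 P3]] [[Q1 [Q2 Q3]] HR]]]]].
    exists (map (fun i => (phi i, psi i)) (seq 0 n)). split; [|split].
    + apply part_map. split; [|split].
      * intros q Hq; apply in_seq in Hq; apply P1; lia.
      * intro k; destruct (P3 k) as [i [Hi Hb]]; exists i; split; auto; apply in_seq; lia.
      * intros q1 q2 k H1 H2 B1 B2; apply in_seq in H1, H2; eapply P2; eauto; lia.
    + apply part_map. split; [|split].
      * intros q Hq; apply in_seq in Hq; apply Q1; lia.
      * intro k; destruct (Q3 k) as [i [Hi Hb]]; exists i; split; auto; apply in_seq; lia.
      * intros q1 q2 k H1 H2 B1 B2; apply in_seq in H1, H2; eapply Q2; eauto; lia.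
    + intros p y Hp; apply in_map_iff in Hp; destruct Hp as [i [<- Hi]]; apply in_seq in Hi.
      simpl; apply HR; lia.
  - intros [L [[P1 [P2 P3]] [[Q1 [Q2 Q3]] HR]]].
    set (L0 := nodup (fun p1 p2 : pr => emi (p1 = p2)) L).
    assert (HN : NoDup L0) by apply NoDup_nodup.
    assert (HI : forall p, In p L0 <-> In p L) by (intro; apply nodup_In).
    exists (length L0), (fun i => fst (nth i L0 dpr)), (fun i => snd (nth i L0 dpr)).
    split; [|split].
    + split; [|split].
      * intros i Hi; apply P1, HI, nth_In; auto.
      * intros i j k Hi Hj B1 B2. eapply NoDup_nth; eauto.
        eapply P3; eauto; apply HI, nth_In; auto.
      * intro k; destruct (P2 k) as [q [Hq Hb]]. apply HI in Hq.
        destruct (In_nth _ _ dpr Hq) as [i [Hi Heq]]. exists i; rewrite Heq; auto.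
    + split; [|split].
      * intros i Hi; apply Q1, HI, nth_In; auto.
      * intros i j k Hi Hj B1 B2. eapply NoDup_nth; eauto.
        eapply Q3; eauto; apply HI, nth_In; auto.
      * intro k; destruct (Q2 k) as [q [Hq Hb]]. apply HI in Hq.
        destruct (In_nth _ _ dpr Hq) as [i [Hi Heq]]. exists i; rewrite Heq; auto.
    + intros i k Hi; apply HR, HI, nth_In; auto.
Qed.

Lemma mkV L : part L fst -> part L snd -> exists h, Rep h L.
Proof.
  intros HP HQ.
  set (ch := fun k => epsilon (inhabits dpr) (fun p => In p L /\ brick (fst p) k)).
  exists (fun k => Phi (snd (ch k)) (stripM (fst (ch k)) k)).
  split; [auto|split; [auto|]].
  intros p y Hp.
  assert (Hc : In (ch (Phi (fst p) y)) L /\ brick (fst (ch (Phi (fst p) y))) (Phi (fst p) y)).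
  { apply epsilon_spec. exists p; split; auto; apply brick_Phi. }
  destruct Hc as [Hc1 Hc2].
  assert (ch (Phi (fst p) y) = p) as ->.
  { destruct HP as [_ [_ H3]]; eapply H3; eauto; apply brick_Phi. }
  rewrite strip_Phi; auto.
Qed.

Definition swp (p : pr) : pr := (snd p, fst p).

Lemma Rep_inv h L : Rep h L -> exists g, Rep g (map swp L) /\
  (forall x, g (h x) = x) /\ (forall x, h (g x) = x).
Proof.
  intros [HP [HQ HR]].
  destruct (mkV (map swp L)) as [g Hg]; try (apply part_map; auto).
  exists g; split; auto. destruct Hg as [_ [_ Hg]].
  assert (Hg' : forall p y, In p L -> g (Phi (snd p) y) = Phi (fst p) y).
  { intros p y Hp; apply (Hg (swp p)); apply in_map; auto. }
  split.
  - intro x. destruct HP as [_ [H2 _]]. destruct (H2 x) as [p [Hp Hb]].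
    rewrite (brick_strip _ _ Hb), HR, Hg'; auto.
  - intro x. destruct HQ as [_ [H2 _]]. destruct (H2 x) as [p [Hp Hb]].
    rewrite (brick_strip _ _ Hb), Hg', HR; auto.
Qed.

Lemma part_image {A} (l : list A) f g (k ki : (X -> Cantor) -> (X -> Cantor)) :
  part l f -> (forall q, In q l -> fin_supp (g q)) ->
  (forall x, k (ki x) = x) -> (forall x, ki (k x) = x) ->
  (forall q y, In q l -> ki (Phi (f q) y) = Phi (g q) y) -> part l g.
Proof.
  intros [_ [H2 H3]] Hf Hk1 Hk2 Hc. split; [auto|split].
  - intro x. destruct (H2 (k x)) as [q [Hq Hb]]. exists q; split; auto.
    apply brick_ex in Hb; destruct Hb as [y Hy].
    rewrite <- (Hk2 x), Hy, Hc; auto; apply brick_Phi.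
  - intros q1 q2 x H1 H2' B1 B2. apply (H3 q1 q2 (k x)); auto.
    + apply brick_ex in B1; destruct B1 as [y ->]. rewrite <- Hc, Hk1; auto; apply brick_Phi.
    + apply brick_ex in B2; destruct B2 as [y ->]. rewrite <- Hc, Hk1; auto; apply brick_Phi.
Qed.

Lemma transfer h L (k ki : (X -> Cantor) -> (X -> Cantor)) F :
  Rep h L -> (forall x, k (ki x) = x) -> (forall x, ki (k x) = x) ->
  (forall p, In p L -> fin_supp (F p)) ->
  (forall p y, In p L -> ki (Phi (fst p) y) = Phi (F p) y) ->
  Rep (fun x => h (k x)) (map (fun p => (F p, snd p)) L).
Proof.
  intros [HP [HQ HR]] Hk1 Hk2 HF Hc. split; [|split].
  - apply part_map; simpl. apply (part_image L fst F k ki); auto.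
  - apply part_map; simpl; auto.
  - intros p' y Hp'. apply in_map_iff in Hp'; destruct Hp' as [p [<- Hp]]; simpl.
    rewrite <- Hc, Hk1; auto.
Qed.

End MW.
Arguments app2 {X}. Arguments stripM {X}. Arguments part {X A}. Arguments Rep {X}.
Arguments swp {X}. Arguments dpr {X}.
Section Ref.
Variable X : Type.
Implicit Types (a b c : X -> word) (y k : X -> Cantor) (h : (X -> Cantor) -> (X -> Cantor)).

Definition single (x : X) (w : word) : X -> word := fun z => if emi (z = x) then w else [].

Lemma single_eq x w : single x w x = w.
Proof. unfold single; destruct (emi (x = x)); congruence. Qed.
Lemma single_neq x w z : z <> x -> single x w z = [].
Proof. unfold single; destruct (emi (z = x)); congruence. Qed.

Lemma fin_supp_single x w : fin_supp (single x w).
Proof. exists [x]; intros z Hz; apply single_neq; intro; apply Hz; left; auto. Qed.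

Lemma brick_single x w k : brick (single x w) k <-> prefix_of w (k x).
Proof.
  split; [intro H; rewrite <- (single_eq x w); apply H|].
  intros H z. destruct (emi (z = x)) as [->|n]; [rewrite single_eq; auto|].
  rewrite single_neq by auto; apply prefix_nil.
Qed.

Definition child x (bt : bool) (p : pr X) : pr X :=
  (app2 (fst p) (single x [bt]), app2 (snd p) (single x [bt])).

Definition refine1 x D (L : list (pr X)) : list (pr X) :=
  flat_map (fun p => if length (fst p x) <? D then [child x false p; child x true p] else [p]) L.

Lemma refine1_mem x D L q : In q (refine1 x D L) -> exists p, In p L /\
  ((length (fst p x) < D /\ exists bt, q = child x bt p) \/ (~ length (fst p x) < D /\ q = p)).
Proof.
  intro H. apply in_flat_map in H; destruct H as [p [Hp Hq]]. exists p; split; auto.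
  destruct (Nat.ltb_spec (length (fst p x)) D).
  - left; split; auto. destruct Hq as [<-|[<-|[]]]; eauto.
  - right; split; [apply Nat.le_ngt; exact H|]. destruct Hq as [<-|[]]; auto.
Qed.

Lemma refine1_in_child x D L p bt : In p L -> length (fst p x) < D ->
  In (child x bt p) (refine1 x D L).
Proof.
  intros Hp Hl. apply in_flat_map; exists p; split; auto.
  destruct (Nat.ltb_spec (length (fst p x)) D); [|nlia]. destruct bt; simpl; auto.
Qed.

Lemma refine1_in_self x D L p : In p L -> ~ length (fst p x) < D -> In p (refine1 x D L).
Proof.
  intros Hp Hl. apply in_flat_map; exists p; split; auto.
  destruct (Nat.ltb_spec (length (fst p x)) D); [nlia|]. simpl; auto.
Qed.

Lemma part_refine1 x D L (proj : pr X -> X -> word) :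
  (forall bt p, proj (child x bt p) = app2 (proj p) (single x [bt])) ->
  part L proj -> part (refine1 x D L) proj.
Proof.
  intros Hc [H1 [H2 H3]]. split; [|split].
  - intros q Hq. destruct (refine1_mem _ _ _ _ Hq) as [p [Hp [[_ [bt ->]]|[_ ->]]]]; auto.
    rewrite Hc. apply fin_supp_app2; auto; apply fin_supp_single.
  - intro k. destruct (H2 k) as [p [Hp Hb]].
    destruct (Nat.lt_ge_cases (length (fst p x)) D) as [Hl|Hl].
    + exists (child x (stripM (proj p) k x 0) p). split; [apply refine1_in_child; auto|].
      rewrite Hc. apply brick_app2; auto. apply brick_single.
      intros i Hi; simpl in Hi. destruct i; [reflexivity|nlia].
    + exists p; split; auto. apply refine1_in_self; auto; nlia.
  - intros q1 q2 k Hq1 Hq2 B1 B2.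
    destruct (refine1_mem _ _ _ _ Hq1) as [p1 [Hp1 C1]].
    destruct (refine1_mem _ _ _ _ Hq2) as [p2 [Hp2 C2]].
    assert (E1 : brick (proj p1) k).
    { destruct C1 as [[_ [bt ->]]|[_ ->]]; auto. rewrite Hc in B1; eapply brick_app2_l; eauto. }
    assert (E2 : brick (proj p2) k).
    { destruct C2 as [[_ [bt ->]]|[_ ->]]; auto. rewrite Hc in B2; eapply brick_app2_l; eauto. }
    assert (p1 = p2) as <- by (eapply H3; eauto).
    destruct C1 as [[L1 [b1 ->]]|[L1 ->]]; destruct C2 as [[L2 [b2 ->]]|[L2 ->]]; try tauto.
    rewrite Hc in B1, B2. specialize (B1 x); specialize (B2 x).
    unfold app2 in B1, B2; rewrite single_eq in B1, B2.
    assert (Hl : length (proj p1 x) < length (proj p1 x ++ [b1])) by (rewrite length_app; simpl; nlia).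
    assert (Hl' : length (proj p1 x) < length (proj p1 x ++ [b2])) by (rewrite length_app; simpl; nlia).
    specialize (B1 _ Hl); specialize (B2 _ Hl').
    rewrite app_nth2, Nat.sub_diag in B1, B2 by nlia. simpl in B1, B2.
    rewrite B1 in B2; subst; auto.
Qed.

Lemma Rep_refine1 x D h L : Rep h L -> Rep h (refine1 x D L).
Proof.
  intros [HP [HQ HR]]. split; [|split].
  - apply part_refine1; auto.
  - apply part_refine1; auto.
  - intros q y Hq. destruct (refine1_mem _ _ _ _ Hq) as [p [Hp [[_ [bt ->]]|[_ ->]]]]; auto.
    simpl. rewrite <- !Phi_app, HR; auto.
Qed.

Fixpoint refineN x D n L := match n with 0 => L | S n => refine1 x D (refineN x D n L) end.

Fixpoint refineAll (F : list X) D L := match F with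
  | [] => L | x :: F => refineAll F D (refineN x D D L) end.


Lemma Rep_refineN x D n h L : Rep h L -> Rep h (refineN x D n L).
Proof. intro H; induction n; simpl; auto; apply Rep_refine1; auto. Qed.

Lemma Rep_refineAll F D h L : Rep h L -> Rep h (refineAll F D L).
Proof. revert L; induction F; simpl; intros L H; auto. apply IHF, Rep_refineN; auto. Qed.


Lemma app2_single_len a x bt : length (app2 a (single x [bt]) x) = S (length (a x)).
Proof. unfold app2; rewrite single_eq, length_app; simpl; nlia. Qed.
Lemma app2_single_neq a x bt z : z <> x -> app2 a (single x [bt]) z = a z.
Proof. intro; unfold app2; rewrite single_neq, app_nil_r; auto. Qed.

Lemma refineN_mem x D n L q : In q (refineN x D n L) -> exists p, In p L /\
  length (fst q x) = Nat.max (length (fst p x)) (Nat.min D (length (fst p x) + n)) /\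
  (forall z, z <> x -> fst q z = fst p z /\ snd q z = snd p z).
Proof.
  revert q; induction n; simpl; intros q Hq.
  - exists q; split; auto; split; [nlia|auto].
  - destruct (refine1_mem _ _ _ _ Hq) as [p1 [Hp1 C]].
    destruct (IHn _ Hp1) as [p [Hp [Hl Ho]]]. exists p; split; auto.
    destruct C as [[Lt [bt ->]]|[Lt ->]].
    + simpl. rewrite app2_single_len. split; [nlia|].
      intros z Hz; rewrite !app2_single_neq by auto; auto.
    + split; auto; nlia.
Qed.

Lemma refineAll_mem F D L q : In q (refineAll F D L) -> exists p, In p L /\
  (forall z, In z F -> length (fst q z) = Nat.max (length (fst p z)) D) /\
  (forall z, ~ In z F -> fst q z = fst p z /\ snd q z = snd p z).
Proof.
  revert L q; induction F as [|x F IH]; simpl; intros L q Hq.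
  - exists q; split; auto; split; [tauto|auto].
  - destruct (IH _ _ Hq) as [p1 [Hp1 [A1 A2]]].
    destruct (refineN_mem _ _ _ _ _ Hp1) as [p [Hp [B1 B2]]].
    exists p; split; auto; split.
    + intros z [->|Hz].
      * destruct (classic (In z F)) as [Hz|Hz].
        -- rewrite A1 by auto; rewrite B1; nlia.
        -- rewrite (proj1 (A2 z Hz)), B1; nlia.
      * rewrite A1 by auto. destruct (emi (z = x)) as [->|n].
        -- rewrite B1; nlia.
        -- rewrite (proj1 (B2 z n)); auto.
    + intros z Hz. assert (z <> x) by auto. assert (~ In z F) by auto.
      rewrite (proj1 (A2 z H0)), (proj2 (A2 z H0)). apply B2; auto.
Qed.

End Ref.
Arguments single {X}. Arguments child {X}. Arguments refine1 {X}.
Arguments refineN {X}. Arguments refineAll {X}.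
Section Comp.
Variable X : Type.
Implicit Types (a b c : X -> word) (y k : X -> Cantor) (h f g : (X -> Cantor) -> (X -> Cantor)).

Lemma supp_list {A} (L : list A) (proj : A -> X -> word) :
  (forall p, In p L -> fin_supp (proj p)) ->
  exists F, forall p x, In p L -> ~ In x F -> proj p x = [].
Proof.
  induction L as [|p L IH]; intros H.
  - exists []; intros p x [].
  - destruct (H p (or_introl eq_refl)) as [l1 H1].
    destruct IH as [F HF]; [intros; apply H; right; auto|].
    exists (l1 ++ F); intros q x [<-|Hq] Hx.
    + apply H1; intro; apply Hx, in_or_app; auto.
    + apply HF; auto; intro; apply Hx, in_or_app; auto.
Qed.

Definition maxL (l : list nat) := fold_right Nat.max 0 l.
Lemma maxL_ge l n : In n l -> n <= maxL l.
Proof. induction l; simpl; [tauto|]; intros [->|H]; [nlia|]. specialize (IHl H); nlia. Qed.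

Definition prefM b c := forall x, exists z, c x = b x ++ z.
Definition diffM b c : X -> word := fun x => skipn (length (b x)) (c x).

Lemma skipn_app_len (l z : word) : skipn (length l) (l ++ z) = z.
Proof. induction l; simpl; auto. Qed.

Lemma prefM_app b c : prefM b c -> c = app2 b (diffM b c).
Proof.
  intro H; apply functional_extensionality; intro x; unfold app2, diffM.
  destruct (H x) as [z Hz]; rewrite Hz, skipn_app_len; auto.
Qed.

Lemma fin_supp_diff b c : fin_supp c -> fin_supp (diffM b c).
Proof. intros [l H]; exists l; intros s Hs; unfold diffM; rewrite H; auto; apply skipn_nil. Qed.

Lemma Rep_comp f g Lf Lg : Rep f Lf -> Rep g Lg -> exists L, Rep (fun x => f (g x)) L.
Proof.
  intros Hf Hg.
  destruct (supp_list Lg snd) as [F HF]; [apply Hg|].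
  set (D := maxL (flat_map (fun p => map (fun x => length (snd p x)) F) Lg)).
  set (Lf' := refineAll F D Lf).
  assert (Hf' : Rep f Lf') by (apply Rep_refineAll; auto).
  assert (Hpre : forall q, In q Lf' -> exists p, In p Lg /\ prefM (snd p) (fst q)).
  { intros q Hq. destruct (refineAll_mem _ _ _ _ _ Hq) as [q0 [_ [HA _]]].
    set (k0 := Phi (fst q) (fun _ _ => false)).
    destruct Hg as [_ [[_ [HC _]] _]]. destruct (HC k0) as [p [Hp Hb]].
    exists p; split; auto. intro x.
    destruct (classic (In x F)) as [Hx|Hx].
    - apply (prefix_le _ _ (k0 x)); [apply Hb|apply brick_Phi|].
      rewrite HA by auto.
      assert (length (snd p x) <= D).
      { apply maxL_ge, in_flat_map. exists p; split; auto. apply in_map_iff; exists x; split; auto. }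
      nlia.
    - rewrite HF by auto. exists (fst q x); auto. }
  destruct (Rep_inv _ g Lg Hg) as [gi [Hgi [E1 E2]]].
  set (pick := fun q : pr X => epsilon (inhabits dpr) (fun p => In p Lg /\ prefM (snd p) (fst q))).
  assert (Hpick : forall q, In q Lf' -> In (pick q) Lg /\ prefM (snd (pick q)) (fst q)).
  { intros q Hq; apply epsilon_spec; auto. }
  exists (map (fun p => ((fun q => app2 (fst (pick q)) (diffM (snd (pick q)) (fst q))) p, snd p)) Lf').
  apply transfer with (ki := gi); auto.
  - intros q Hq. destruct (Hpick q Hq) as [H1 _]. apply fin_supp_app2.
    + apply Hg; auto.
    + apply fin_supp_diff. apply Hf'; auto.
  - intros q y Hq. destruct (Hpick q Hq) as [H1 H2].
    rewrite (prefM_app _ _ H2) at 1. rewrite <- Phi_app, <- Phi_app.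
    destruct Hgi as [_ [_ HR]]. apply (HR (swp (pick q))). apply in_map; auto.
Qed.

Lemma Rep_id : @Rep X (fun x => x) [(fun _ => [], fun _ => [])].
Proof.
  assert (HP : forall proj : pr X -> X -> word, proj (fun _ => [], fun _ => []) = (fun _ => []) ->
     part [(fun _ => [], fun _ => [])] proj).
  { intros proj Hp. split; [|split].
    - intros q [<-|[]]; rewrite Hp; exists []; auto.
    - intro k; exists (fun _ => [], fun _ => []); split; [left; auto|].
      rewrite Hp; intro s; apply prefix_nil.
    - intros q1 q2 k [<-|[]] [<-|[]]; auto. }
  split; [apply HP; auto|split; [apply HP; auto|]].
  intros p y [<-|[]]; auto.
Qed.

Lemma Rep_inv2 f g L : Rep f L -> (forall x, g (f x) = x) -> (forall x, f (g x) = x) ->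
  Rep g (map swp L).
Proof.
  intros [HP [HQ HR]] E1 E2. split; [apply part_map; auto|split; [apply part_map; auto|]].
  intros p' y Hp'. apply in_map_iff in Hp'; destruct Hp' as [p [<- Hp]]; simpl.
  rewrite <- HR, E1; auto.
Qed.

End Comp.
Arguments maxL_ge {l n}.
Section Sub.
Variable S : Type.
Variable P : S -> Prop.
Notation SP := {x : S | P x}.

Definition resM (a : S -> word) : SP -> word := fun z => a (proj1_sig z).
Definition ext0 (k : SP -> Cantor) : S -> Cantor :=
  fun x => match emi (P x) with left p => k (exist _ x p) | right _ => fun _ => false end.
Definition extM (a : SP -> word) : S -> word :=
  fun x => match emi (P x) with left p => a (exist _ x p) | right _ => [] end.

Definition suppP (L : list (pr S)) := forall p x, In p L -> ~ P x -> fst p x = [] /\ snd p x = [].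

Lemma ext0_P k x (p : P x) : ext0 k x = k (exist _ x p).
Proof. unfold ext0; destruct (emi (P x)) as [p'|n]; [|contradiction]. f_equal; f_equal; apply proof_irrelevance. Qed.
Lemma extM_P a x (p : P x) : extM a x = a (exist _ x p).
Proof. unfold extM; destruct (emi (P x)) as [p'|n]; [|contradiction]. f_equal; f_equal; apply proof_irrelevance. Qed.
Lemma extM_nP a x : ~ P x -> extM a x = [].
Proof. unfold extM; destruct (emi (P x)); tauto. Qed.

Lemma restr_ext0 k : restrictT P (ext0 k) = k.
Proof. apply functional_extensionality; intros [x p]; unfold restrictT; simpl; apply ext0_P. Qed.

Lemma brick_resM a k : (forall x, ~ P x -> a x = []) -> brick (resM a) k <-> brick a (ext0 k).
Proof.
  intro Ha; split.
  - intros H x. destruct (emi (P x)) as [p|n].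
    + rewrite (ext0_P k x p). apply (H (exist _ x p)).
    + rewrite Ha by auto; apply prefix_nil.
  - intros H [x p]. unfold resM; simpl. rewrite <- (ext0_P k x p). apply H.
Qed.

Lemma ext0_Phi a y : (forall x, ~ P x -> a x = []) -> ext0 (Phi (resM a) y) = Phi a (ext0 y).
Proof.
  intro Ha; apply functional_extensionality; intro x. unfold Phi.
  destruct (emi (P x)) as [p|n].
  - rewrite !ext0_P with (p := p). reflexivity.
  - rewrite Ha by auto. unfold ext0; destruct (emi (P x)); [contradiction|]. rewrite wcat_nil; auto.
Qed.

Lemma fin_supp_resM a : fin_supp a -> fin_supp (resM a).
Proof.
  intros [l H].
  exists (flat_map (fun x => match emi (P x) with left p => [exist P x p] | right _ => [] end) l).
  intros [x p] Hz. unfold resM; simpl. apply H. intro Hx. apply Hz.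
  apply in_flat_map; exists x; split; auto.
  destruct (emi (P x)) as [p'|n]; [|contradiction]. left; f_equal; apply proof_irrelevance.
Qed.

Lemma local_out h L : Rep h L -> suppP L -> forall k x, ~ P x -> h k x = k x.
Proof.
  intros [[_ [HC _]] [_ HR]] Hs k x Hx. destruct (HC k) as [p [Hp Hb]].
  rewrite (brick_strip _ _ _ Hb), HR by auto. unfold Phi, stripM.
  rewrite (proj1 (Hs p x Hp Hx)), (proj2 (Hs p x Hp Hx)). simpl. rewrite wcat_nil, dropC0; auto.
Qed.

Lemma local_in h L : Rep h L -> suppP L -> forall k k', (forall x, P x -> k x = k' x) ->
  forall x, P x -> h k x = h k' x.
Proof.
  intros [[_ [HC _]] [_ HR]] Hs k k' Hkk x Hx. destruct (HC k) as [p [Hp Hb]].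
  assert (Hb' : brick (fst p) k').
  { intro z. destruct (emi (P z)) as [pz|nz].
    - rewrite <- Hkk by auto; apply Hb.
    - rewrite (proj1 (Hs p z Hp nz)); apply prefix_nil. }
  rewrite (brick_strip _ _ _ Hb), (brick_strip _ _ _ Hb'), !HR by auto.
  unfold Phi, stripM. rewrite Hkk; auto.
Qed.

Lemma sub_to h L : Rep h L -> suppP L -> subV P h.
Proof.
  intros HR Hs.
  set (Ls := map (fun p : pr S => (resM (fst p), resM (snd p))) L).
  set (hs := fun k : SP -> Cantor => restrictT P (h (ext0 k))).
  exists hs. split.
  - apply BV_Rep. exists Ls. destruct HR as [[P1 [P2 P3]] [[Q1 [Q2 Q3]] HR]].
    split; [|split].
    + apply part_map; simpl. split; [|split].
      * intros q Hq; apply fin_supp_resM; auto.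
      * intro k. destruct (P2 (ext0 k)) as [q [Hq Hb]]. exists q; split; auto.
        apply brick_resM; auto. intros; apply Hs; auto.
      * intros q1 q2 k H1 H2 B1 B2. apply (P3 q1 q2 (ext0 k)); auto.
        -- apply brick_resM in B1; auto. intros; apply Hs; auto.
        -- apply brick_resM in B2; auto. intros; apply Hs; auto.
    + apply part_map; simpl. split; [|split].
      * intros q Hq; apply fin_supp_resM; auto.
      * intro k. destruct (Q2 (ext0 k)) as [q [Hq Hb]]. exists q; split; auto.
        apply brick_resM; auto. intros; apply Hs; auto.
      * intros q1 q2 k H1 H2 B1 B2. apply (Q3 q1 q2 (ext0 k)); auto.
        -- apply brick_resM in B1; auto. intros; apply Hs; auto.
        -- apply brick_resM in B2; auto. intros; apply Hs; auto.
    + intros p' y Hp'. apply in_map_iff in Hp'; destruct Hp' as [p [<- Hp]]; simpl.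
      unfold hs. rewrite ext0_Phi by (intros; apply Hs; auto). rewrite HR by auto.
      apply functional_extensionality; intros [x px]. unfold restrictT, Phi, resM; simpl.
      rewrite ext0_P with (p := px); auto.
  - apply functional_extensionality; intro k; apply functional_extensionality; intro x.
    unfold extendT. destruct (excluded_middle_informative (P x)) as [p|n].
    + unfold hs, restrictT; simpl. apply (local_in h L HR Hs); auto.
      intros z pz. rewrite ext0_P with (p := pz); auto.
    + apply (local_out h L HR Hs); auto.
Qed.

Lemma brick_extM a k : brick (extM a) k <-> brick a (restrictT P k).
Proof.
  split.
  - intros H [x p]. unfold restrictT; simpl. rewrite <- (extM_P a x p). apply H.
  - intros H x. destruct (emi (P x)) as [p|n].
    + rewrite (extM_P a x p). apply (H (exist _ x p)).
    + rewrite extM_nP by auto; apply prefix_nil.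
Qed.

Lemma fin_supp_extM a : fin_supp a -> fin_supp (extM a).
Proof.
  intros [l H]. exists (map (@proj1_sig _ _) l). intros x Hx.
  destruct (emi (P x)) as [p|n]; [|apply extM_nP; auto].
  rewrite (extM_P a x p). apply H. intro Hin; apply Hx.
  apply in_map_iff; exists (exist _ x p); auto.
Qed.

Lemma sub_from f : subV P f -> exists L, Rep f L.
Proof.
  intros [h [HB ->]]. apply BV_Rep in HB. destruct HB as [L [[P1 [P2 P3]] [[Q1 [Q2 Q3]] HR]]].
  exists (map (fun p : pr SP => (extM (fst p), extM (snd p))) L). split; [|split].
  - apply part_map; simpl. split; [|split].
    + intros q Hq; apply fin_supp_extM; auto.
    + intro k. destruct (P2 (restrictT P k)) as [q [Hq Hb]]. exists q; split; auto.
      apply brick_extM; auto.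
    + intros q1 q2 k H1 H2 B1 B2. apply (P3 q1 q2 (restrictT P k)); auto; apply brick_extM; auto.
  - apply part_map; simpl. split; [|split].
    + intros q Hq; apply fin_supp_extM; auto.
    + intro k. destruct (Q2 (restrictT P k)) as [q [Hq Hb]]. exists q; split; auto.
      apply brick_extM; auto.
    + intros q1 q2 k H1 H2 B1 B2. apply (Q3 q1 q2 (restrictT P k)); auto; apply brick_extM; auto.
  - intros p' y Hp'. apply in_map_iff in Hp'; destruct Hp' as [p [<- Hp]]; simpl.
    apply functional_extensionality; intro x. unfold extendT.
    destruct (excluded_middle_informative (P x)) as [px|n].
    + assert (restrictT P (Phi (extM (fst p)) y) = Phi (fst p) (restrictT P y)) as ->.
      { apply functional_extensionality; intros [z pz]; unfold restrictT, Phi; simpl.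
        rewrite (extM_P _ z pz); auto. }
      rewrite HR by auto. unfold Phi, restrictT; simpl. rewrite (extM_P _ x px); auto.
    + unfold Phi. rewrite !extM_nP by auto. auto.
Qed.

End Sub.
Section Grid.
Variable X : Type.
Implicit Types (a b c : X -> word) (y k : X -> Cantor).

Definition upd c x w : X -> word := fun z => if emi (z = x) then w else c z.
Lemma upd_eq c x w : upd c x w x = w.
Proof. unfold upd; destruct (emi (x = x)); congruence. Qed.
Lemma upd_neq c x w z : z <> x -> upd c x w z = c z.
Proof. unfold upd; destruct (emi (z = x)); congruence. Qed.

Fixpoint words n : list word := match n with
  | 0 => [[]] | S n => flat_map (fun w => [false :: w; true :: w]) (words n) end.

Lemma words_len n w : In w (words n) <-> length w = n.
Proof.
  revert w; induction n; simpl; intro w.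
  - split; [intros [<-|[]]; auto|destruct w; simpl; [auto|discriminate]].
  - rewrite in_flat_map. split.
    + intros [v [Hv [<-|[<-|[]]]]]; simpl; f_equal; apply IHn; auto.
    + destruct w as [|bt v]; simpl; [discriminate|]. intro Hl. exists v; split; [apply IHn; auto|].
      destruct bt; simpl; auto.
Qed.

Fixpoint cells (T : list X) D : list (X -> word) := match T with
  | [] => [fun _ => []]
  | x :: T => flat_map (fun c => map (fun w => upd c x w) (words D)) (cells T D) end.

Definition isCell T D c := (forall x, In x T -> length (c x) = D) /\ (forall x, ~ In x T -> c x = []).

Lemma cells_isCell T D c : In c (cells T D) -> isCell T D c.
Proof.
  revert c; induction T as [|x T IH]; simpl; intros c Hc.
  - destruct Hc as [<-|[]]; split; [intros ? []|auto].
  - apply in_flat_map in Hc; destruct Hc as [c0 [H0 Hc]]. apply in_map_iff in Hc.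
    destruct Hc as [w [<- Hw]]. apply words_len in Hw. destruct (IH _ H0) as [A1 A2].
    split.
    + intros z [->|Hz]; [rewrite upd_eq; auto|].
      destruct (emi (z = x)) as [->|n]; [rewrite upd_eq; auto|rewrite upd_neq; auto].
    + intros z Hz. rewrite upd_neq by (intro; apply Hz; left; auto). apply A2; intro; apply Hz; right; auto.
Qed.

Lemma isCell_cells T D c : NoDup T -> isCell T D c -> In c (cells T D).
Proof.
  revert c; induction T as [|x T IH]; simpl; intros c HN [A1 A2].
  - left; apply functional_extensionality; intro z; symmetry; apply A2; auto.
  - inversion HN; subst. apply in_flat_map.
    exists (upd c x []). split.
    + apply IH; auto. split.
      * intros z Hz. rewrite upd_neq by (intro; subst; contradiction). apply A1; right; auto.
      * intros z Hz. destruct (emi (z = x)) as [->|n]; [apply upd_eq|].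
        rewrite upd_neq by auto. apply A2. intros [|]; auto.
    + apply in_map_iff. exists (c x); split; [|apply words_len, A1; left; auto].
      apply functional_extensionality; intro z. unfold upd.
      destruct (emi (z = x)); [subst; auto|auto].
Qed.

Definition catw (T : list X) c : word := flat_map c T.

Lemma firstn_len_app (l m : word) : firstn (length l) (l ++ m) = l.
Proof. induction l; simpl; f_equal; auto. Qed.

Lemma catw_len T D c : (forall x, In x T -> length (c x) = D) -> length (catw T c) = length T * D.
Proof.
  induction T; simpl; intro H; auto. unfold catw in *; simpl. rewrite length_app, H, IHT; auto.
Qed.

Lemma catw_inj T D c1 c2 : (forall x, In x T -> length (c1 x) = D /\ length (c2 x) = D) ->
  catw T c1 = catw T c2 -> forall x, In x T -> c1 x = c2 x.
Proof.
  induction T as [|x0 T IH]; simpl; intros H He x Hx; [contradiction|].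
  unfold catw in He; simpl in He.
  destruct (H x0 (or_introl eq_refl)) as [L1 L2].
  assert (E1 : c1 x0 = c2 x0).
  { rewrite <- (firstn_len_app (c1 x0) (flat_map c1 T)), He, L1, <- L2.
    apply firstn_len_app. }
  destruct Hx as [->|Hx]; auto.
  apply IH; auto. rewrite E1 in He. apply app_inv_head in He; auto.
Qed.

Lemma catw_upd T c x w : ~ In x T -> catw T (upd c x w) = catw T c.
Proof.
  intro H; unfold catw. induction T as [|z T IH]; simpl; auto.
  rewrite upd_neq by (intro; subst; apply H; left; auto). f_equal. apply IH. intro; apply H; right; auto.
Qed.

Fixpoint dec (T : list X) D (z : Cantor) : X -> word := match T with
  | [] => fun _ => []
  | x :: T => upd (dec T D (dropC D z)) x (firstC D z) end.

Lemma dec_cell T D z : NoDup T -> isCell T D (dec T D z).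
Proof.
  revert z; induction T as [|x T IH]; simpl; intros z HN.
  - split; [intros ? []|auto].
  - inversion HN; subst. destruct (IH (dropC D z) H2) as [A1 A2]. split.
    + intros x' [->|Hx']; [rewrite upd_eq; apply firstC_len|].
      rewrite upd_neq by (intro; subst; contradiction). auto.
    + intros x' Hx'. rewrite upd_neq by (intro; apply Hx'; left; auto). apply A2; intro; apply Hx'; right; auto.
Qed.

Lemma dec_prefix T D z : NoDup T -> prefix_of (catw T (dec T D z)) z.
Proof.
  revert z; induction T as [|x T IH]; simpl; intros z HN.
  - apply prefix_nil.
  - inversion HN; subst. unfold catw; simpl. rewrite upd_eq.
    fold (catw T (upd (dec T D (dropC D z)) x (firstC D z))). rewrite catw_upd by auto.
    apply prefix_app; split; [apply firstC_prefix|]. rewrite firstC_len; apply IH; auto.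
Qed.

Definition cellOf T D k : X -> word := fun x => if emi (In x T) then firstC D (k x) else [].

Lemma part_cells T D : NoDup T -> @part X _ (cells T D) (fun c => c).
Proof.
  intro HN; split; [|split].
  - intros c Hc. exists T. apply cells_isCell in Hc. apply Hc.
  - intro k. exists (cellOf T D k); split.
    + apply isCell_cells; auto. split; intros x Hx; unfold cellOf; destruct (emi (In x T)); try tauto.
      apply firstC_len.
    + intro x; unfold cellOf; destruct (emi (In x T)); [apply firstC_prefix|apply prefix_nil].
  - intros c1 c2 k H1 H2 B1 B2. apply cells_isCell in H1, H2.
    apply functional_extensionality; intro x. destruct (classic (In x T)) as [Hx|Hx].
    + apply (prefix_eq _ _ (k x)); auto. rewrite (proj1 H1), (proj1 H2); auto.
    + rewrite (proj2 H1), (proj2 H2); auto.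
Qed.

Lemma part_cells_cat T D (u : X) : NoDup T -> part (cells T D) (fun c => single u (catw T c)).
Proof.
  intro HN; split; [|split].
  - intros; apply fin_supp_single.
  - intro k. exists (dec T D (k u)); split.
    + apply isCell_cells, dec_cell; auto.
    + apply brick_single, dec_prefix; auto.
  - intros c1 c2 k H1 H2 B1 B2. apply cells_isCell in H1, H2.
    apply brick_single in B1, B2.
    assert (E : catw T c1 = catw T c2).
    { apply (prefix_eq _ _ (k u)); auto. rewrite (catw_len T D), (catw_len T D); auto.
      apply H2. apply H1. }
    apply functional_extensionality; intro x. destruct (classic (In x T)) as [Hx|Hx].
    + apply (catw_inj T D); auto. intros; split; [apply H1|apply H2]; auto.
    + rewrite (proj2 H1), (proj2 H2); auto.
Qed.

Lemma brick_pair (u r : X) e w k : u <> r ->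
  (brick (app2 (single u e) (single r w)) k <-> prefix_of e (k u) /\ prefix_of w (k r)).
Proof.
  intro Hur. split.
  - intro H. split.
    + specialize (H u). unfold app2 in H. rewrite single_eq, single_neq, app_nil_r in H; auto.
    + specialize (H r). unfold app2 in H. rewrite single_eq, single_neq in H; auto.
  - intros [H1 H2] x. unfold app2.
    destruct (emi (x = u)) as [->|n1].
    + rewrite single_eq, single_neq, app_nil_r; auto.
    + rewrite (single_neq _ u e x n1). simpl.
      destruct (emi (x = r)) as [->|n2]; [rewrite single_eq; auto|].
      rewrite single_neq by auto; apply prefix_nil.
Qed.

Lemma part_merge {A} (l : list A) (u r : X) (e w : A -> word) N : u <> r ->
  (forall q, In q l -> length (e q) = N) ->
  part l (fun q => app2 (single u (e q)) (single r (w q))) ->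
  part l (fun q => single u (e q ++ w q)).
Proof.
  intros Hur HN [_ [H2 H3]].
  set (k' := fun k : X -> Cantor => fun x => if emi (x = r) then dropC N (k u) else k x).
  assert (K1 : forall k, k' k u = k u).
  { intro k; unfold k'; destruct (emi (u = r)); congruence. }
  assert (K2 : forall k, k' k r = dropC N (k u)).
  { intro k; unfold k'; destruct (emi (r = r)); congruence. }
  assert (Hb : forall q k, In q l -> brick (single u (e q ++ w q)) k <->
      brick (app2 (single u (e q)) (single r (w q))) (k' k)).
  { intros q k Hq. rewrite brick_single, brick_pair, K1, K2, prefix_app, HN by auto. tauto. }
  split; [|split].
  - intros; apply fin_supp_single.
  - intro k. destruct (H2 (k' k)) as [q [Hq B]]. exists q; split; auto. apply Hb; auto.
  - intros q1 q2 k Hq1 Hq2 B1 B2. apply (H3 q1 q2 (k' k)); auto; apply Hb; auto.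
Qed.

End Grid.
Arguments upd {X}. Arguments cells {X}. Arguments catw {X}. Arguments dec {X}.
Section Main.
Variable S : Type.
Variable E : S -> S -> Prop.
Definition Gset := fun f => exists s t, E s t /\ edgeV s t f.
Notation Gen := (generated Gset).

Definition suppL (L : list (pr S)) (T : list S) :=
  forall p x, In p L -> ~ In x T -> fst p x = [] /\ snd p x = [].
Definition BVT (T : list S) h := exists L, Rep h L /\ suppL L T.

Lemma gen_ext f f' : Gen f -> (forall x, f x = f' x) -> Gen f'.
Proof. intros H Hx. replace f' with f; auto. apply functional_extensionality; auto. Qed.

Lemma edge_gen u r : E u r -> forall h, BVT [u; r] h -> Gen h.
Proof.
  intros He h [L [HR Hs]]. apply gen_base. exists u, r; split; auto.
  unfold edgeV. apply (sub_to _ _ h L HR). intros p x Hp Hx. apply Hs; auto.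
  simpl; intros [|[|[]]]; apply Hx; auto.
Qed.

Lemma Gen_inv f L : Gen f -> Rep f L -> exists fi, Gen fi /\ (forall x, fi (f x) = x) /\ (forall x, f (fi x) = x).
Proof.
  intros Hg HR. destruct (Rep_inv _ f L HR) as [fi [_ [E1 E2]]]. exists fi; split; auto.
  apply (gen_inv _ f fi); auto.
Qed.

Lemma catw_ext T (c1 c2 : S -> word) : (forall x, In x T -> c1 x = c2 x) -> catw T c1 = catw T c2.
Proof.
  unfold catw; induction T; simpl; intro H; auto. rewrite H by auto. f_equal; apply IHT; auto.
Qed.

Lemma lemA (T : list S) (u r : S) : NoDup T -> In u T -> ~ In r T ->
  (forall g, BVT T g -> Gen g) -> (forall g, BVT [u; r] g -> Gen g) ->
  forall h L, Rep h L -> suppL L (r :: T) ->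
  exists k ki L', Gen k /\ Gen ki /\ (forall x, k (ki x) = x) /\ (forall x, ki (k x) = x) /\
    Rep (fun x => h (k x)) L' /\ suppL L' (r :: T) /\ (forall p, In p L' -> fst p r = []) /\
    (forall p', In p' L' -> exists p, In p L /\ snd p' r = snd p r).
Proof.
  intros HN Hu Hr IHT IHe h L HR Hs.
  assert (Hur : u <> r) by (intro; subst; contradiction).
  set (D := maxL (flat_map (fun p : pr S => map (fun x => length (fst p x)) T) L)).
  set (L1 := refineAll T D L).
  assert (HR1 : Rep h L1) by (apply Rep_refineAll; auto).
  assert (HL1 : forall q, In q L1 -> (forall x, In x T -> length (fst q x) = D) /\
     exists p, In p L /\ forall z, ~ In z T -> fst q z = fst p z /\ snd q z = snd p z).
  { intros q Hq. destruct (refineAll_mem _ _ _ _ _ Hq) as [p [Hp [A1 A2]]]. split.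
    - intros x Hx. rewrite A1 by auto.
      assert (length (fst p x) <= D).
      { apply maxL_ge, in_flat_map. exists p; split; auto. apply in_map_iff; exists x; split; auto. }
      nlia.
    - exists p; split; auto. }
  assert (Hs1 : suppL L1 (r :: T)).
  { intros q x Hq Hx. destruct (HL1 q Hq) as [_ [p [Hp Hpq]]].
    assert (~ In x T) by (intro; apply Hx; right; auto).
    rewrite (proj1 (Hpq x H)), (proj2 (Hpq x H)). apply Hs; auto. }
  set (Ls := map (fun c => (c, single u (catw T c))) (cells T D)).
  destruct (mkV _ Ls) as [sg Hsg].
  { apply part_map; simpl. apply part_cells; auto. }
  { apply part_map; simpl. apply part_cells_cat; auto. }
  assert (Gsg : Gen sg).
  { apply IHT. exists Ls; split; auto. intros p x Hp Hx.
    apply in_map_iff in Hp; destruct Hp as [c [<- Hc]]; simpl. split.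
    - apply cells_isCell in Hc. apply Hc; auto.
    - apply single_neq. intro; subst; contradiction. }
  destruct (Gen_inv _ _ Gsg Hsg) as [sgi [Gsgi [S1 S2]]].
  set (cA := fun a : S -> word => fun x => if emi (In x T) then a x else []).
  set (Sg := fun q : pr S => app2 (single u (catw T (fst q))) (single r (fst q r))).
  set (Tg := fun q : pr S => single u (catw T (fst q) ++ fst q r)).
  assert (Hsig : forall q y, In q L1 -> sg (Phi (fst q) y) = Phi (Sg q) y).
  { intros q y Hq. destruct (HL1 q Hq) as [A1 _].
    assert (Ha : fst q = app2 (cA (fst q)) (single r (fst q r))).
    { apply functional_extensionality; intro x; unfold app2, cA.
      destruct (emi (In x T)) as [Hx|Hx].
      - rewrite single_neq, app_nil_r; auto. intro; subst; contradiction.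
      - destruct (emi (x = r)) as [->|n].
        + rewrite single_eq; auto.
        + rewrite single_neq by auto. simpl. apply (Hs1 q x Hq). intros [|]; auto. }
    rewrite Ha at 1. rewrite <- Phi_app.
    destruct Hsg as [_ [_ Hsg3]].
    rewrite (Hsg3 (cA (fst q), single u (catw T (cA (fst q))))).
    - simpl. unfold Sg. rewrite <- Phi_app.
      replace (catw T (cA (fst q))) with (catw T (fst q)); [reflexivity|].
      apply catw_ext. intros x Hx; unfold cA; destruct (emi (In x T)); tauto.
    - apply in_map_iff. exists (cA (fst q)); split; auto. apply isCell_cells; auto. split.
      + intros x Hx; unfold cA; destruct (emi (In x T)); [apply A1|]; tauto.
      + intros x Hx; unfold cA; destruct (emi (In x T)); tauto. }
  assert (PS : part L1 Sg).
  { apply (part_image _ L1 fst Sg sgi sg); auto; [apply HR1|].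
    intros; unfold Sg; apply fin_supp_app2; apply fin_supp_single. }
  assert (PT : part L1 Tg).
  { apply (part_merge _ L1 u r (fun q => catw T (fst q)) (fun q => fst q r) (length T * D)); auto.
    intros q Hq. apply (catw_len _ T D). apply HL1; auto. }
  set (Lr := map (fun q => (Sg q, Tg q)) L1).
  destruct (mkV _ Lr) as [rh Hrh]; [apply part_map; auto|apply part_map; auto|].
  assert (Grh : Gen rh).
  { apply IHe. exists Lr; split; auto. intros p x Hp Hx.
    apply in_map_iff in Hp; destruct Hp as [q [<- Hq]]; simpl.
    assert (x <> u) by (intro; subst; apply Hx; left; auto).
    assert (x <> r) by (intro; subst; apply Hx; right; left; auto).
    unfold Sg, Tg, app2. rewrite !single_neq by auto. auto. }
  destruct (Gen_inv _ _ Grh Hrh) as [rhi [Grhi [R1 R2]]].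
  exists (fun x => sgi (rhi x)), (fun x => rh (sg x)), (map (fun q => (Tg q, snd q)) L1).
  split; [apply gen_comp; auto|]. split; [apply gen_comp; auto|].
  split; [intro x; rewrite R1, S1; auto|]. split; [intro x; rewrite S2, R2; auto|].
  split.
  - apply transfer with (ki := fun x => rh (sg x)); auto.
    + intro x; rewrite R1, S1; auto.
    + intro x; rewrite S2, R2; auto.
    + intros; apply fin_supp_single.
    + intros q y Hq. rewrite Hsig by auto. destruct Hrh as [_ [_ Hr3]].
      apply (Hr3 (Sg q, Tg q)). apply in_map_iff; exists q; split; auto.
  - split; [|split].
    + intros p x Hp Hx. apply in_map_iff in Hp; destruct Hp as [q [<- Hq]]; simpl. split.
      * unfold Tg; apply single_neq. intro; subst; apply Hx; right; auto.
      * apply (Hs1 q x Hq Hx).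
    + intros p Hp. apply in_map_iff in Hp; destruct Hp as [q [<- Hq]]; simpl.
      unfold Tg; apply single_neq; auto.
    + intros p' Hp'. apply in_map_iff in Hp'; destruct Hp' as [q [<- Hq]]; simpl.
      destruct (HL1 q Hq) as [_ [p [Hp Hpq]]]. exists p; split; auto. apply Hpq; auto.
Qed.

End Main.
Section Final.
Variable S : Type.
Variable E : S -> S -> Prop.
Notation Gen := (generated (Gset S E)).

Lemma step T u r : NoDup T -> In u T -> ~ In r T -> E u r ->
  (forall g, BVT S T g -> Gen g) -> forall h, BVT S (r :: T) h -> Gen h.
Proof.
  intros HN Hu Hr He IHT h [L [HR Hs]].
  pose proof (edge_gen S E u r He) as IHe.
  destruct (lemA S E T u r HN Hu Hr IHT IHe h L HR Hs)
    as [k1 [ki1 [L1 [Gk1 [Gki1 [K1 [K2 [HR1 [Hs1 [Hsrc1 _]]]]]]]]]].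
  destruct (Rep_inv _ _ L1 HR1) as [g [Hg [G1 G2]]].
  assert (Hs1' : suppL S (map swp L1) (r :: T)).
  { intros p x Hp Hx. apply in_map_iff in Hp; destruct Hp as [q [<- Hq]]; simpl.
    destruct (Hs1 q x Hq Hx); auto. }
  destruct (lemA S E T u r HN Hu Hr IHT IHe g _ Hg Hs1')
    as [k2 [ki2 [L2 [Gk2 [Gki2 [K3 [K4 [HR2 [Hs2 [Hsrc2 Htgt2]]]]]]]]]].
  assert (Gw : Gen (fun x => g (k2 x))).
  { apply IHT. exists L2; split; auto. intros p x Hp Hx.
    destruct (emi (x = r)) as [->|n].
    - split; [apply Hsrc2; auto|].
      destruct (Htgt2 p Hp) as [q [Hq Hqe]]. rewrite Hqe.
      apply in_map_iff in Hq; destruct Hq as [q0 [<- Hq0]]; simpl. apply Hsrc1; auto.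
    - apply Hs2; auto. intros [|]; auto. }
  destruct (Gen_inv S E _ _ Gw HR2) as [wi [Gwi [W1 W2]]].
  apply gen_ext with (fun x => k2 (wi (ki1 x))).
  - apply gen_comp; auto. apply gen_comp; auto.
  - intro x. rewrite <- (G2 (k2 (wi (ki1 x)))), W2, K1. auto.
Qed.

Inductive good : list S -> Prop :=
| good_e s t : E s t -> good [s; t]
| good_a T u r : good T -> In u T -> E u r -> ~ In r T -> good (r :: T).

Hypothesis Eirr : forall x, ~ E x x.

Lemma good_nodup T : good T -> NoDup T.
Proof.
  induction 1.
  - constructor; [intros [->|[]]; apply (Eirr s); auto|constructor; [intros []|constructor]].
  - constructor; auto.
Qed.

Lemma good_gen T : good T -> forall h, BVT S T h -> Gen h.
Proof.
  induction 1.
  - apply edge_gen; auto.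
  - apply (step T u r); auto. apply good_nodup; auto.
Qed.

Lemma reach u x : clos_refl_trans_1n S E u x -> forall T, good T -> In u T ->
  exists T', good T' /\ (forall z, In z T -> In z T') /\ In x T'.
Proof.
  induction 1 as [u|u z x Huz Hzx IH]; intros T HT Hu.
  - exists T; auto.
  - destruct (classic (In z T)) as [Hz|Hz].
    + apply (IH T); auto.
    + destruct (IH (z :: T)) as [T' [H1 [H2 H3]]].
      * apply good_a with u; auto.
      * left; auto.
      * exists T'; split; auto. split; auto. intros; apply H2; right; auto.
Qed.

Hypothesis hS : exists s t : S, s <> t.
Hypothesis Econn : forall x y, clos_refl_trans S E x y.

Lemma good_ex F : exists T, good T /\ forall x, In x F -> In x T.
Proof.
  induction F as [|x F IH].
  - destruct hS as [s [t Hst]]. pose proof (clos_rt_rt1n _ _ _ _ (Econn s t)) as H.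
    inversion H; subst; [contradiction|]. exists [s; y]; split; [apply good_e; auto|intros _ []].
  - destruct IH as [T [HT HF]].
    assert (exists u, In u T) as [u Hu] by (destruct HT; eexists; left; eauto).
    destruct (reach u x (clos_rt_rt1n _ _ _ _ (Econn u x)) T HT Hu) as [T' [H1 [H2 H3]]].
    exists T'; split; auto. intros z [<-|Hz]; auto.
Qed.

End Final.

Theorem proposition3p2 (S : Type) (E : S -> S -> Prop)
  (hS : exists s t : S, s <> t)
  (Esym : forall x y, E x y -> E y x)
  (Eirr : forall x, ~ E x x)
  (Econn : forall x y, clos_refl_trans S E x y) :
  forall h : (S -> Cantor) -> (S -> Cantor),
    BV S h <-> generated (fun f => exists s t, E s t /\ edgeV s t f) h.
Proof.
  intro h; split.
  - intro HB. apply BV_Rep in HB. destruct HB as [L HR].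
    destruct (supp_list _ L fst) as [F1 HF1]; [apply HR|].
    destruct (supp_list _ L snd) as [F2 HF2]; [apply HR|].
    destruct (good_ex S E hS Econn (F1 ++ F2)) as [T [HT HFT]].
    apply (good_gen S E Eirr T HT). exists L; split; auto.
    intros p x Hp Hx. split.
    + apply HF1; auto. intro; apply Hx, HFT, in_or_app; auto.
    + apply HF2; auto. intro; apply Hx, HFT, in_or_app; auto.
  - induction 1 as [f Hf| |f g _ IHf _ IHg|f g _ IHf E1 E2].
    + destruct Hf as [s [t [_ He]]]. apply BV_Rep. apply (sub_from _ _ f He).
    + apply BV_Rep. exists [(fun _ => [], fun _ => [])]. apply Rep_id.
    + apply BV_Rep in IHf, IHg. destruct IHf as [Lf Hf], IHg as [Lg Hg].
      apply BV_Rep. apply (Rep_comp _ f g Lf Lg); auto.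
    + apply BV_Rep in IHf. destruct IHf as [L HL]. apply BV_Rep.
      exists (map swp L). apply (Rep_inv2 _ f g L); auto.
Qed.
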